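(* Let $m\ge 1$. Any product two-action game with $m$ players whose characteristic tuple is $(\underline v,\sigma^1,\dots,\sigma^m)=((0,\dots,0),\delta^1,\dots,\delta^m)$ is maximal; that is, for every $\pi\in S_m\setminus\mathrm{Der}_m$, exactly half of the elements of $EC(\pi)$ are Nash equilibria. (Such games exist for every $m$: choose $v_i=0$ and numbers $a^i_j\in(0,1)$ ordered according to $\delta^j$, and e.g. $U^i(s^i_0,\cdot)=0$, with $V^i$ the multilinear map $\gamma^i\prod_{j\neq i}(\gamma^j-a^i_j)$.)
   Context: Fix an integer $m\ge 1$ and $\mathcal A=\{1,\dots,m\}$. A two-action game is a finite game in normal form with player set $\mathcal A$ in which each player $i$ has exactly two pure strategies $s^i_0,s^i_1$, together with utility functions $U^i:S\to\mathbb R$, where $S=\prod_{i\in\mathcal A}\{s^i_0,s^i_1\}$. A mixed strategy combination is identified with $\underline\gamma=(\gamma^1,\dots,\gamma^m)\in[0,1]^m$, where $\gamma^i$ is the probability with which player $i$ plays $s^i_1$. The expected utility $V^i$ is the multilinear extension $V^i(\underline\gamma)=\sum_{(j_1,\dots,j_m)\in\{0,1\}^m}\prod_{k=1}^m p_k(j_k)\,U^i(s^1_{j_1},\dots,s^m_{j_m})$ with $p_k(1)=\gamma^k$, $p_k(0)=1-\gamma^k$. Write $\underline\gamma^{-i}=(\gamma^j)_{j\ne i}$ and $\lambda^i(\underline\gamma^{-i}):=V^i(\underline\gamma)|_{\gamma^i=1}-V^i(\underline\gamma)|_{\gamma^i=0}$. A Nash equilibrium is a point $\underline\gamma\in[0,1]^m$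 such that for every $i$: $\lambda^i(\underline\gamma^{-i})=0$ if $0<\gamma^i<1$; $\lambda^i(\underline\gamma^{-i})\le 0$ if $\gamma^i=0$; $\lambda^i(\underline\gamma^{-i})\ge 0$ if $\gamma^i=1$. For $\underline\gamma$ put $L(\underline\gamma)=\{i:\gamma^i\in\{0,1\}\}$. A two-action game is a product two-action game if there exist $\underline v=(v_1,\dots,v_m)\in\{0,1\}^m$ and numbers $a^i_j\in(0,1)$ for $i,j\in\mathcal A$, $i\ne j$, with $a^{i_1}_j\neq a^{i_2}_j$ whenever $i_1\neq i_2$ and both differ from $j$, such that $\lambda^i(\underline\gamma^{-i})=(-1)^{v_i}\prod_{j\in\mathcal A\setminus\{i\}}(\gamma^j-a^i_j)$ for every $i\in\mathcal A$. For $j\in\mathcal A$ the $j$-th associated permutation $\sigma^j\in S_m$ is the unique permutation with $\sigma^j(j)=j$ such that for $i,i'\in\mathcal A\setminus\{j\}$ one has $\sigma^j(i)<\sigma^j(i')$ iff $a^i_j>a^{i'}_j$. The tuple $(\underline v,\sigma^1,\dots,\sigma^m)$ is the characteristic tuple. For $\pi\in S_m$, $F(\pi)=\{i:\pi(i)=i\}$; $\mathrm{Der}_m=\{\pi\in S_m: F(\pi)=\emptyset\}$; $EC(\pi):=\{\underline\gamma\in[0,1]^m \mid L(\underline\gamma)=F(\pi),\ \gamma^j=a^{\pi(j)}_j \text{ for all } j\notin F(\pi)\}$. A product two-action game is maximal if for every $\pi\in S_m\setminus\mathrm{Der}_m$ exactly half of the elements of $EC(\pi)$ are Nash equilibria.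 For $j\in\mathcal A$, $\delta^j\in S_m$ is the unique permutation with $\delta^j(j)=j$ such that for all $k_1<k_2$ in $\mathcal A\setminus\{j\}$ one has $\delta^j(k_1)>\delta^j(k_2)$ iff $k_1<j<k_2$. *)

(* Defs.v *)
(* Two-action games with players 'I_m (0-based indices). *)
From HB Require Import structures.
From mathcomp Require Import all_boot all_order all_algebra all_fingroup.
Set Implicit Arguments. Unset Strict Implicit. Unset Printing Implicit Defensive.
Import Order.TTheory GRing.Theory Num.Theory.
Local Open Scope ring_scope.

Section Games.
Variables (R : realFieldType) (m : nat).

(* A pure strategy profile (s^1_{j_1},...,s^m_{j_m}) is encoded by the
   vector (j_1,...,j_m) in {0,1}^m, i.e. a finite function 'I_m -> bool
   (true = s^k_1, false = s^k_0).  U i s = U^i(s). *)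
Definition game := 'I_m -> {ffun 'I_m -> bool} -> R.

Definition pweight (g : 'I_m -> R) (k : 'I_m) (b : bool) : R :=
  if b then g k else 1 - g k.

Definition Vexp (U : game) (i : 'I_m) (g : 'I_m -> R) : R :=
  \sum_(s : {ffun 'I_m -> bool}) (\prod_(k < m) pweight g k (s k)) * U i s.

Definition upd (g : 'I_m -> R) (i : 'I_m) (x : R) : 'I_m -> R :=
  fun k => if k == i then x else g k.

Definition lam (U : game) (i : 'I_m) (g : 'I_m -> R) : R :=
  Vexp U i (upd g i 1) - Vexp U i (upd g i 0).

Definition in_cube (g : {ffun 'I_m -> R}) : bool :=
  [forall k, (0 <= g k) && (g k <= 1)].

Definition nash (U : game) (g : {ffun 'I_m -> R}) : bool :=
  in_cube g &&
  [forall i, [&& ((0 < g i) && (g i < 1)) ==> (lam U i g == 0),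
                 (g i == 0) ==> (lam U i g <= 0) &
                 (g i == 1) ==> (0 <= lam U i g)]].

(* product two-action game with data v, a  (a i j = a^i_j) *)
Definition product_game (U : game) (v : 'I_m -> bool) (a : 'I_m -> 'I_m -> R)
  : Prop :=
  [/\ (forall i j : 'I_m, i != j -> 0 < a i j < 1),
      (forall i1 i2 j : 'I_m, i1 != i2 -> i1 != j -> i2 != j -> a i1 j != a i2 j)
    & (forall (i : 'I_m) (g : 'I_m -> R), (forall k, 0 <= g k <= 1) ->
        lam U i g = (-1) ^+ v i * \prod_(j < m | j != i) (g j - a i j))].

Definition assoc_perm (a : 'I_m -> 'I_m -> R) (j : 'I_m) (s : {perm 'I_m}) : Prop :=
  s j = j /\
  forall i i' : 'I_m, i != j -> i' != j -> ((s i < s i')%N <-> a i' j < a i j).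

Definition delta_perm (j : 'I_m) (s : {perm 'I_m}) : Prop :=
  s j = j /\
  forall k1 k2 : 'I_m, (k1 < k2)%N -> k1 != j -> k2 != j ->
    ((s k2 < s k1)%N <-> (k1 < j < k2)%N).

(* the characteristic tuple is (v, sigma^1..sigma^m) = (w, tau^1..tau^m) where
   the tau^j are determined by their defining property tauP j *)
Definition char_tuple_is (v : 'I_m -> bool) (a : 'I_m -> 'I_m -> R)
  (w : 'I_m -> bool) (tauP : 'I_m -> {perm 'I_m} -> Prop) : Prop :=
  (forall i, v i = w i) /\
  (forall j, exists s : {perm 'I_m}, tauP j s /\ assoc_perm a j s).

Definition EC (a : 'I_m -> 'I_m -> R) (pi : {perm 'I_m}) (g : {ffun 'I_m -> R})
  : bool :=
  [&& in_cube g,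
      [forall j, ((g j == 0) || (g j == 1)) == (pi j == j)] &
      [forall j, (pi j != j) ==> (g j == a (pi j) j)]].

Definition half_nash (U : game) (a : 'I_m -> 'I_m -> R) (pi : {perm 'I_m}) : Prop :=
  exists s : seq {ffun 'I_m -> R},
    [/\ uniq s, (forall g, (g \in s) = EC a pi g) &
        (count (nash U) s).*2 = size s].

Definition maximal (U : game) (a : 'I_m -> 'I_m -> R) : Prop :=
  forall pi : {perm 'I_m}, (exists i, pi i = i) -> half_nash U a pi.

End Games.

(* Main.v *)
Require Import Defs.
From mathcomp Require Import all_boot all_order all_algebra all_fingroup.
From mathcomp Require Import zify ring lra.
Import Order.TTheory GRing.Theory Num.Theory.
Local Open Scope ring_scope.
Set Implicit Arguments. Unset Strict Implicit.

Lemma boolfact (i j k : nat) : i != j -> k != j -> (i < k)%N ->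
  ~~ (i < j < k)%N = ((j < i)%N (+) false (+) (k < j)%N).
Proof.
move=> /eqP ij /eqP kj ik.
case: (ltngtP i j) => h1; case: (ltngtP k j) => h2 //=; lia.
Qed.

Lemma boolfact2 (i j k : nat) : i != j -> k != j -> (k < i)%N ->
  (k < j < i)%N = ((j < i)%N (+) true (+) (k < j)%N).
Proof.
move=> /eqP ij /eqP kj ik.
case: (ltngtP i j) => h1; case: (ltngtP k j) => h2 //=; lia.
Qed.

Lemma order_fact (R : realFieldType) m (a : 'I_m -> 'I_m -> R) :
  (forall j, exists s : {perm 'I_m}, delta_perm j s /\ assoc_perm a j s) ->
  forall i k j : 'I_m, i != j -> k != j -> i != k ->
  (a k j < a i j) = ((j < i)%N (+) (k < i)%N (+) (k < j)%N).
Proof.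
move=> H i k j ij kj ik; have [s [[sj ds] [_ as_]]] := H j.
have E1 : (a k j < a i j) = (s i < s k)%N.
  by apply/idP/idP => h; apply/(as_ i k ij kj).
have sik : (nat_of_ord (s i)) != s k by rewrite (inj_eq val_inj) (inj_eq perm_inj).
rewrite E1; case: (ltngtP i k) => hik.
- have h := ds i k hik ij kj.
  have -> : (s i < s k)%N = ~~ (s k < s i)%N.
    by rewrite ltnNge leq_eqVlt (eq_sym (nat_of_ord (s k))) (negbTE sik).
  have -> : (s k < s i)%N = (i < j < k)%N by apply/idP/idP => /h.
  by apply: boolfact.
- have h := ds k i hik kj ij.
  have -> : (s i < s k)%N = (k < j < i)%N by apply/idP/idP => /h.
  by apply: boolfact2.
- by move: ik; rewrite -(inj_eq val_inj) /= hik eqxx.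
Qed.

Lemma ECP (R : realFieldType) m (a : 'I_m -> 'I_m -> R) (pi : {perm 'I_m}) (g : {ffun 'I_m -> R}) :
  EC a pi g ->
  [/\ (forall k, 0 <= g k <= 1), (forall j, pi j == j -> g j = 0 \/ g j = 1)
    & (forall j, pi j != j -> g j = a (pi j) j)].
Proof.
case/and3P => /forallP c /forallP h1 /forallP h2; split.
- by move=> k; have /andP[-> ->] := c k.
- move=> j hj; have := h1 j; rewrite hj => /eqP/orP[] /eqP; by [left|right].
- by move=> j hj; have /implyP/(_ hj)/eqP := h2 j.
Qed.

Lemma ECI (R : realFieldType) m (a : 'I_m -> 'I_m -> R) (pi : {perm 'I_m}) (g : {ffun 'I_m -> R}) :
  (forall i j : 'I_m, i != j -> 0 < a i j < 1) ->
  (forall k, 0 <= g k <= 1) -> (forall j, pi j == j -> g j = 0 \/ g j = 1) ->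
  (forall j, pi j != j -> g j = a (pi j) j) -> EC a pi g.
Proof.
move=> ha c h1 h2; apply/and3P; split; apply/forallP => j.
- exact: c.
- case: (eqVneq (pi j) j) => hj.
    case: (h1 j (introT eqP hj)) => ->; by rewrite eqxx ?orbT.
  rewrite (h2 j hj); have /andP[a0 a1] := ha _ _ hj.
  by rewrite (gt_eqF a0) (lt_eqF a1).
- by apply/implyP => hj; rewrite (h2 j hj).
Qed.

Definition Pf (R : realFieldType) m (pi : {perm 'I_m}) (g : {ffun 'I_m -> R}) : R :=
  \prod_(j < m | pi j == j) (g j *+ 2 - 1).
Definition Ef (R : realFieldType) m (pi : {perm 'I_m}) : R :=
  \prod_(j < m) (-1) ^+ (pi j < j)%N.

Lemma key (R : realFieldType) m (a : 'I_m -> 'I_m -> R) (pi : {perm 'I_m})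
  (g : {ffun 'I_m -> R}) (i : 'I_m) :
  (forall i j : 'I_m, i != j -> 0 < a i j < 1) ->
  (forall i1 i2 j : 'I_m, i1 != i2 -> i1 != j -> i2 != j -> a i1 j != a i2 j) ->
  (forall j, exists s : {perm 'I_m}, delta_perm j s /\ assoc_perm a j s) ->
  pi i = i -> EC a pi g ->
  0 < (\prod_(j < m | j != i) (g j - a i j)) * (g i *+ 2 - 1) * (Pf pi g * Ef R pi).
Proof.
move=> Hpos Hdist Hord hi /ECP [c h1 h2].
pose t := fun j : 'I_m => ((-1) ^+ ((j < i)%N (+) (pi j < i)%N (+) (pi j < j)%N) : R).
pose w := fun j => if pi j == j then g j *+ 2 - 1 else t j.
have hT : \prod_(j < m) t j = Ef R pi.
  rewrite /Ef /t; under eq_bigr => j _ do rewrite !signr_addb.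
  rewrite !big_split /=.
  have <- : \prod_(j < m) ((-1) ^+ (j < i)%N : R) = \prod_(j < m) (-1) ^+ (pi j < i)%N.
    exact: (reindex_inj (@perm_inj _ pi)).
  by rewrite -big_split /= big1 ?mul1r // => j _; rewrite -signr_addb addbb.
have hF : \prod_(j < m | pi j == j) t j = 1.
  by apply: big1 => j /eqP e; rewrite /t e addbb ltnn.
have hW : \prod_(j < m) w j = Pf pi g * Ef R pi.
  rewrite (bigID (fun j => pi j == j)) /= -hT (bigID (fun j => pi j == j) _ t) /= hF mul1r.
  congr (_ * _); apply: eq_bigr => j hj; by rewrite /w ?hj // (negbTE hj).
have hwi : w i = g i *+ 2 - 1 by rewrite /w hi eqxx.
have hsq : (g i *+ 2 - 1) * (g i *+ 2 - 1) = 1.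
  have e : pi i == i by rewrite hi.
  by case: (h1 i e) => ->; rewrite ?mul0rn ?mulr2n; lra.
have hpos : forall j, j != i -> 0 < (g j - a i j) * w j.
  move=> j ji; have ij : i != j by rewrite eq_sym.
  have /andP[a0 a1] := Hpos i j ij.
  rewrite /w; case: (eqVneq (pi j) j) => hj.
    by case: (h1 j (introT eqP hj)) => ->; rewrite ?mul0rn ?mulr2n; lra.
  rewrite (h2 j hj).
  have pji : pi j != i.
    apply/eqP => e; move/eqP: ji; apply; apply: (@perm_inj _ pi); by rewrite e hi.
  have ip : i != pi j by rewrite eq_sym.
  rewrite /t -(order_fact Hord ij hj (ip : i != pi j)).
  have hne := Hdist (pi j) i j pji hj ij.
  case hlt: (a (pi j) j < a i j); rewrite ?expr1 ?expr0.
    by rewrite mulrN1 oppr_gt0 subr_lt0.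
  by rewrite mulr1 subr_gt0 lt_neqAle eq_sym hne leNgt hlt.
rewrite -hW [X in _ * X](bigD1 i) // hwi.
set L := \prod_(j < m | j != i) _.
set W := \prod_(j < m | j != i) _.
have -> : L * (g i *+ 2 - 1) * ((g i *+ 2 - 1) * W) =
          ((g i *+ 2 - 1) * (g i *+ 2 - 1)) * (L * W) by ring.
rewrite hsq mul1r /L /W -big_split /=.
by apply: prodr_gt0 => j hj; apply: hpos.
Qed.

Lemma nashE (R : realFieldType) m (U : game R m) (v : 'I_m -> bool)
  (a : 'I_m -> 'I_m -> R) (pi : {perm 'I_m}) (g : {ffun 'I_m -> R}) (i0 : 'I_m) :
  product_game U v a -> (forall i, v i = false) ->
  (forall j, exists s : {perm 'I_m}, delta_perm j s /\ assoc_perm a j s) ->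
  pi i0 = i0 -> EC a pi g ->
  nash U g = (0 < Pf pi g * Ef R pi).
Proof.
move=> [Hpos Hdist Hlam] Hv Hord hi0 hEC.
have [c h1 h2] := ECP hEC.
have lamE : forall i, lam U i g = \prod_(j < m | j != i) (g j - a i j).
  by move=> i; rewrite Hlam // Hv expr0 mul1r.
have cond : forall i, pi i = i ->
   [&& (0 < g i) && (g i < 1) ==> (lam U i g == 0),
       (g i == 0) ==> (lam U i g <= 0) & (g i == 1) ==> (0 <= lam U i g)]
   = (0 < Pf pi g * Ef R pi).
  move=> i hi; have K := key Hpos Hdist Hord hi hEC; rewrite -lamE in K.
  move: K; set x := lam U i g; set y := Pf pi g * Ef R pi => K.
  case: (h1 i (introT eqP hi)) => gi; rewrite gi in K *.
  - rewrite ltxx eqxx (eq_sym 0) oner_eq0 /=.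
    rewrite mul0rn sub0r mulrN1 in K.
    by apply/idP/idP => h; nra.
  - rewrite ltxx oner_eq0 eqxx andbF /=.
    rewrite mulr2n addrK mulr1 in K.
    by apply/idP/idP => h; nra.
have cb : in_cube g by case/and3P: hEC.
rewrite /nash cb /=.
apply/forallP/idP.
- by move=> H; move: (H i0); rewrite cond.
- move=> hy i; case: (eqVneq (pi i) i) => hi.
    by rewrite cond.
  rewrite (h2 i hi); have /andP[a0 a1] := Hpos (pi i) i hi.
  rewrite a0 a1 (gt_eqF a0) (lt_eqF a1) /= andbT.
  pose j := (pi^-1)%g i.
  have pj : pi j = i by rewrite /j permKV.
  have ji : j != i by apply: contra_neq hi => e; rewrite -{1}e pj.
  have hj : pi j != j by rewrite pj eq_sym.
  by rewrite lamE (bigD1 j) //= (h2 j hj) pj subrr mul0r.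
Qed.

Unset Implicit Arguments.
Theorem theorem4p4 (R : realFieldType) (m : nat) (U : game R m)
  (v : 'I_m -> bool) (a : 'I_m -> 'I_m -> R) :
  (0 < m)%N ->
  product_game U v a ->
  char_tuple_is v a (fun _ => false) (@delta_perm m) ->
  maximal U a.
Proof.
move=> _ HP [Hv Hord] pi [i0 hi0].
have [Hpos Hdist Hlam] := HP.
pose phi (b : {ffun 'I_m -> bool}) : {ffun 'I_m -> R} :=
  [ffun j => if pi j == j then (if b j then 1 else 0) else a (pi j) j].
pose s := undup (map phi (enum {ffun 'I_m -> bool})).
have hmem : forall g, (g \in s) = EC a pi g.
  move=> g; rewrite mem_undup; apply/mapP/idP.
  - case=> b _ ->; apply: ECI => //.
    + move=> k; rewrite ffunE; case: eqP => hk.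
        by case: (b k); rewrite ?ler01 ?lexx.
      have /andP[a0 a1] := Hpos (pi k) k (introN eqP hk).
      by rewrite (ltW a0) (ltW a1).
    + by move=> j hj; rewrite ffunE hj; case: (b j); [right|left].
    + by move=> j hj; rewrite ffunE (negbTE hj).
  - move=> hEC; have [c h1 h2] := ECP hEC.
    exists [ffun j => g j == 1]; first by rewrite mem_enum.
    apply/ffunP => j; rewrite !ffunE; case: (eqVneq (pi j) j) => hj.
      by case: (h1 j (introT eqP hj)) => ->; rewrite ?eqxx // (eq_sym 0) oner_eq0.
    by rewrite (h2 j hj).
pose tau (g : {ffun 'I_m -> R}) : {ffun 'I_m -> R} :=
  [ffun j => if j == i0 then 1 - g j else g j].
have tauK : involutive tau.
  move=> g; apply/ffunP => j; rewrite !ffunE; case: (j == i0) => //.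
  by rewrite opprB addrC subrK.
have tau_inj : injective tau := can_inj tauK.
have ECtau : forall g, EC a pi g -> EC a pi (tau g).
  move=> g /ECP [c h1 h2]; apply: ECI => //.
  - move=> k; rewrite ffunE; case: ifP => _ //.
    by have /andP[c0 c1] := c k; apply/andP; split; lra.
  - move=> j hj; rewrite ffunE; case: ifP => _; last exact: h1.
    by case: (h1 j hj) => ->; rewrite ?subr0 ?subrr; [right|left].
  - move=> j hj; rewrite ffunE; case: eqP => e; last exact: h2.
    by move: hj; rewrite e hi0 eqxx.
have Ptau : forall g, Pf pi (tau g) = - Pf pi g.
  move=> g; rewrite /Pf (bigD1 i0) ?hi0 //= [in RHS](bigD1 i0) ?hi0 //=.
  have -> : \prod_(j < m | (pi j == j) && (j != i0)) (tau g j *+ 2 - 1) =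
            \prod_(j < m | (pi j == j) && (j != i0)) (g j *+ 2 - 1).
    by apply: eq_bigr => j /andP[_ hj]; rewrite ffunE (negbTE hj).
  rewrite ffunE eqxx !mulr2n; ring.
have nash_tau : forall g, EC a pi g -> nash U (tau g) = ~~ nash U g.
  move=> g hg.
  rewrite !(nashE HP Hv Hord hi0) ?ECtau // Ptau mulNr oppr_gt0.
  have := key Hpos Hdist Hord hi0 hg; set y := Pf pi g * Ef R pi => K.
  have y0 : y != 0 by apply: contraTneq K => ->; rewrite mulr0 ltxx.
  by rewrite -leNgt le_eqVlt (negbTE y0).
have hperm : perm_eq s (map tau s).
  apply: uniq_perm; first exact: undup_uniq.
    by rewrite (map_inj_uniq tau_inj) undup_uniq.
  move=> x; rewrite -{2}(tauK x) (mem_map tau_inj) !hmem.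
  apply/idP/idP => h; first exact: ECtau.
  by rewrite -(tauK x); apply: ECtau.
exists s; split; first exact: undup_uniq.
  exact: hmem.
have c1 : count (nash U) s = count (predC (nash U)) s.
  rewrite [LHS](seq.permP hperm) count_map.
  by apply: eq_in_count => g hg; rewrite /= nash_tau // -hmem.
by rewrite -addnn {2}c1 count_predC.
Qed.
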